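(* Let $\mathbf{A},\mathbf{B}\in\mathbb{C}$ be constants and let $\mathcal{U},\mathcal{V},\mathcal{W},\mathcal{H}$ be as in the context. Then the system $$\frac{d\vartheta_2}{d\tau}=\frac i\pi\Big\{\eta+\frac{\pi^2}{12}(\vartheta_3^4+\vartheta_4^4)\Big\}\vartheta_2,\quad\frac{d\vartheta_3}{d\tau}=\mathcal U,\quad\frac{d\vartheta_4}{d\tau}=\mathcal V,\quad\frac{d\eta}{d\tau}=\mathcal W$$ can be written (where $\mathcal H\ne0$) in the gradient form $$\frac{d}{d\tau}\begin{pmatrix}\vartheta_2\\\vartheta_3\\\vartheta_4\\\eta\end{pmatrix}=\Omega(\vartheta,\eta)\begin{pmatrix}\mathcal H_{\vartheta_2}\\\mathcal H_{\vartheta_3}\\\mathcal H_{\vartheta_4}\\\mathcal H_\eta\end{pmatrix},\qquad \Omega(\vartheta,\eta)=\frac{\vartheta_2}{4\mathcal H}\begin{pmatrix}0&\mathcal U&\mathcal V&\mathcal W\\-\mathcal U&0&0&0\\-\mathcal V&0&0&0\\-\mathcal W&0&0&0\end{pmatrix},$$ with Hamilton function $\mathcal H$; the corresponding Poisson bracket $\Omega$ is degenerate ($\det\Omega\equiv0$) but single-valued.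
   Context: $\mathcal U=\frac i\pi\{\eta+\frac{\pi^2}{12}(\vartheta_3^4+\vartheta_4^4-3\mathbf B^4\vartheta_4^4)\}\vartheta_3$, $\mathcal V=\frac i\pi\{\eta+\frac{\pi^2}{12}(\vartheta_3^4+\vartheta_4^4-3\mathbf A^4\vartheta_3^4)\}\vartheta_4$, $\mathcal W=\frac i\pi2\eta^2-\frac{\pi^3}{72}i\{\vartheta_3^8+(9\mathbf A^4\mathbf B^4-6\mathbf A^4-6\mathbf B^4+2)\vartheta_3^4\vartheta_4^4+\vartheta_4^8\}$, and $\mathcal H(\vartheta_2,\vartheta_3,\vartheta_4,\eta)=\mathbf A^4\frac{\vartheta_3^4}{\vartheta_2^4}-\mathbf B^4\frac{\vartheta_4^4}{\vartheta_2^4}$. Subscripts on $\mathcal H$ denote partial derivatives. *)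

(* Defs.v *)
(* complex numbers are R[i] = complex R for R : realType
   (mathcomp-real-closed), viewed as a normed field over itself, so that
   derivatives ('D_1 f) of functions R[i] -> R[i] are complex derivatives. *)
From HB Require Import structures.
From mathcomp Require Import all_boot all_order all_algebra.
From mathcomp Require Import all_classical all_reals all_analysis.
From mathcomp Require Import complex.
Set Implicit Arguments. Unset Strict Implicit. Unset Printing Implicit Defensive.
Import Order.TTheory GRing.Theory Num.Theory.
Import numFieldNormedType.Exports.
Local Open Scope ring_scope.
Local Open Scope complex_scope.

Section Defs.
Variable R : realType.
Notation C := R[i].

Definition piC : C := (pi : R)%:C.
Definition iC : C := 'i.

Definition F2 (t2 t3 t4 e : C) : C :=
  iC / piC * (e + piC ^+ 2 / 12%:R * (t3 ^+ 4 + t4 ^+ 4)) * t2.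

Definition calU (A B t3 t4 e : C) : C :=
  iC / piC * (e + piC ^+ 2 / 12%:R *
     (t3 ^+ 4 + t4 ^+ 4 - 3%:R * B ^+ 4 * t4 ^+ 4)) * t3.

Definition calV (A B t3 t4 e : C) : C :=
  iC / piC * (e + piC ^+ 2 / 12%:R *
     (t3 ^+ 4 + t4 ^+ 4 - 3%:R * A ^+ 4 * t3 ^+ 4)) * t4.

Definition calW (A B t3 t4 e : C) : C :=
  iC / piC * 2%:R * e ^+ 2 - piC ^+ 3 / 72%:R * iC *
    (t3 ^+ 8 + (9%:R * A ^+ 4 * B ^+ 4 - 6%:R * A ^+ 4 - 6%:R * B ^+ 4 + 2%:R)
                 * t3 ^+ 4 * t4 ^+ 4 + t4 ^+ 8).

Definition calH (A B t2 t3 t4 e : C) : C :=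
  A ^+ 4 * (t3 ^+ 4 / t2 ^+ 4) - B ^+ 4 * (t4 ^+ 4 / t2 ^+ 4).

Definition field_vec (A B t2 t3 t4 e : C) : 'cV[C]_4 :=
  \col_(k < 4) [:: F2 t2 t3 t4 e; calU A B t3 t4 e; calV A B t3 t4 e;
                   calW A B t3 t4 e]`_k.

Definition gradH (A B t2 t3 t4 e : C) : 'cV[C]_4 :=
  \col_(k < 4)
   [:: 'D_1 (fun z : C^o => (calH A B z t3 t4 e : C^o)) t2;
       'D_1 (fun z : C^o => (calH A B t2 z t4 e : C^o)) t3;
       'D_1 (fun z : C^o => (calH A B t2 t3 z e : C^o)) t4;
       'D_1 (fun z : C^o => (calH A B t2 t3 t4 z : C^o)) e]`_k.

Definition Omega (A B t2 t3 t4 e : C) : 'M[C]_4 :=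
  let U := calU A B t3 t4 e in
  let V := calV A B t3 t4 e in
  let W := calW A B t3 t4 e in
  (t2 / (4%:R * calH A B t2 t3 t4 e)) *:
  \matrix_(k < 4, l < 4)
   nth (0 : C) (nth [::] [:: [:: 0; U; V; W];
       [:: - U; 0; 0; 0];
       [:: - V; 0; 0; 0];
       [:: - W; 0; 0; 0]] k) l.
End Defs.

(* Main.v *)
Require Import Defs.
From HB Require Import structures.
From mathcomp Require Import all_boot all_order all_algebra.
From mathcomp Require Import all_classical all_reals all_analysis.
From mathcomp Require Import complex.
From mathcomp Require Import ring lra.
Import Order.TTheory GRing.Theory Num.Theory.
Import numFieldNormedType.Exports.
Local Open Scope ring_scope.

Section H.
Variable K : numFieldType.
Lemma d_cpow (c : K) n (x : K^o) :
  is_derive x 1 (fun z : K^o => (c * z ^+ n : K^o)) (c * (n%:R * x ^+ n.-1)).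
Proof.
have h := is_deriveZ c (is_deriveX n (is_derive_id x (1 : K^o))).
have -> : (fun z : K^o => (c * z ^+ n : K^o)) = c \*: (id ^+ n) by apply: boolp.funext => z; rewrite /= ?exprfctE.
by apply: (is_derive_eq h); rewrite /= [_%:A]mulr1.
Qed.

Lemma d_cinv (c : K) n (x : K^o) : x != 0 ->
  is_derive x 1 (fun z : K^o => (c * (z ^+ n)^-1 : K^o))
    (c * (- (x ^+ n) ^- 2 * (n%:R * x ^+ n.-1))).
Proof.
move=> x0.
have xn : (id ^+ n : K^o -> K^o) x != 0 by rewrite exprfctE /= expf_neq0.
have dX := is_deriveX n (is_derive_id x (1 : K^o)).
have dv := derivableV xn (@ex_derive _ _ _ _ _ _ _ dX).
have Dv := deriveV xn (@ex_derive _ _ _ _ _ _ _ dX).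
have hV : is_derive x (1:K^o) (fun y : K^o => ((id ^+ n : K^o -> K^o) y)^-1)
   (- ((id ^+ n : K^o -> K^o) x) ^- 2 *: ((n%:R * x ^+ n.-1) *: (1:K^o))).
  by apply: DeriveDef => //; rewrite Dv derive_val.
have h := is_deriveZ c hV.
have E : (fun z : K^o => (c * (z ^+ n)^-1 : K^o)) = c \*: (fun y : K^o => ((id ^+ n : K^o -> K^o) y)^-1).
  apply: boolp.funext => z /=. rewrite exprfctE. by [].
rewrite E.
by apply: (is_derive_eq h); rewrite /= exprfctE [_%:A]mulr1.
Qed.

Lemma d_aff (c d : K) n (x : K^o) :
  is_derive x 1 (fun z : K^o => (c * z ^+ n + d : K^o)) (c * (n%:R * x ^+ n.-1)).
Proof.
have h := is_deriveD (d_cpow c n x) (is_derive_cst (d : K^o) x 1).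
have -> : (fun z : K^o => (c * z ^+ n + d : K^o)) = (fun z : K^o => (c * z ^+ n : K^o)) + cst d by apply: boolp.funext.
by apply: (is_derive_eq h); rewrite addr0.
Qed.
End H.


Theorem theorem9p7 (R : realType) (A B t2 t3 t4 e : R[i]) :
  t2 != 0 -> calH A B t2 t3 t4 e != 0 ->
  [/\ derivable (fun z : R[i]^o => (calH A B z t3 t4 e : R[i]^o)) t2 1,
      derivable (fun z : R[i]^o => (calH A B t2 z t4 e : R[i]^o)) t3 1,
      derivable (fun z : R[i]^o => (calH A B t2 t3 z e : R[i]^o)) t4 1
    & derivable (fun z : R[i]^o => (calH A B t2 t3 t4 z : R[i]^o)) e 1] /\
  field_vec A B t2 t3 t4 e = Omega A B t2 t3 t4 e *m gradH A B t2 t3 t4 e /\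
  \det (Omega A B t2 t3 t4 e) = 0.
Proof.
move=> t20 H0.
set K := A ^+ 4 * t3 ^+ 4 - B ^+ 4 * t4 ^+ 4.
have E2 : (fun z : R[i]^o => (calH A B z t3 t4 e : R[i]^o)) =
   (fun z : R[i]^o => (K * (z ^+ 4)^-1 : R[i]^o)).
  by apply: boolp.funext => z; rewrite /calH /K; ring.
have E3 : (fun z : R[i]^o => (calH A B t2 z t4 e : R[i]^o)) =
   (fun z : R[i]^o => ((A ^+ 4 / t2 ^+ 4) * z ^+ 4 + (- (B ^+ 4 * (t4 ^+ 4 / t2 ^+ 4))) : R[i]^o)).
  by apply: boolp.funext => z; rewrite /calH; ring.
have E4 : (fun z : R[i]^o => (calH A B t2 t3 z e : R[i]^o)) =
   (fun z : R[i]^o => ((- (B ^+ 4 / t2 ^+ 4)) * z ^+ 4 + A ^+ 4 * (t3 ^+ 4 / t2 ^+ 4) : R[i]^o)).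
  by apply: boolp.funext => z; rewrite /calH; ring.
have Ee : (fun z : R[i]^o => (calH A B t2 t3 t4 z : R[i]^o)) =
   cst (calH A B t2 t3 t4 e : R[i]^o) by [].
have d2 := d_cinv _ K 4 (t2 : R[i]^o) t20.
have d3 := d_aff _ (A ^+ 4 / t2 ^+ 4) (- (B ^+ 4 * (t4 ^+ 4 / t2 ^+ 4))) 4 (t3 : R[i]^o).
have d4 := d_aff _ (- (B ^+ 4 / t2 ^+ 4)) (A ^+ 4 * (t3 ^+ 4 / t2 ^+ 4)) 4 (t4 : R[i]^o).
have de := is_derive_cst (calH A B t2 t3 t4 e : R[i]^o) (e : R[i]^o) 1.
split.
  rewrite E2 E3 E4 Ee; split.
  - exact: (@ex_derive _ _ _ _ _ _ _ d2).
  - exact: (@ex_derive _ _ _ _ _ _ _ d3).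
  - exact: (@ex_derive _ _ _ _ _ _ _ d4).
  - exact: (@ex_derive _ _ _ _ _ _ _ de).
split.
  apply/matrixP => i j.
  rewrite ord1 /gradH /Omega E2 E3 E4 Ee !derive_val.
  have HK : calH A B t2 t3 t4 e = K / t2 ^+ 4 by rewrite /calH /K; ring.
  have K0 : K != 0.
    by move: H0; rewrite HK mulf_eq0 negb_or => /andP[].
  have pi0 : piC R != 0.
    by rewrite /piC eq_complex /= negb_and; apply/orP; left; rewrite gt_eqF // pi_gt0.
  rewrite /field_vec !mxE !big_ord_recr big_ord0 /= !mxE /= HK.
  rewrite /F2 /calU /calV /calW.
  case: i => [[|[|[|[|?]]]] Hi] //=; rewrite /=.
  - move: (piC R) pi0 (iC R) K0 => p p0 ii; rewrite /K => K0.
    field. by rewrite p0 t20 !exprMn K0.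
  - move: (piC R) pi0 (iC R) => p p0 ii.
    field. by rewrite p0 t20 K0.
  - move: (piC R) pi0 (iC R) => p p0 ii.
    field. by rewrite p0 t20 K0.
  - move: (piC R) pi0 (iC R) => p p0 ii.
    field. by rewrite ?p0 t20 K0.
rewrite /Omega detZ (expand_det_col _ (inord 1)) big1 ?mulr0 // => k _.
case: k => [[|[|[|[|?]]]] Hk] //; rewrite !mxE /= ?inordK ?mul0r //=.
rewrite /cofactor (expand_det_col _ (inord 1)) big1 ?mulr0 // => a _.
rewrite !mxE.
case: a => [[|[|[|?]]] Ha] //; rewrite /= ?inordK //= ?mul0r //.
Qed.
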